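(* Let $\Pi$ be a program (possibly containing default negation $\neg$ and arbitrarily nested explicit negation $\sim$) and let $T$ be a consistent set of explicit literals. Then $T$ is an answer set of $\Pi$ if and only if $\langle T,T\rangle$ is an equilibrium model of $\Pi$ (viewing $\Pi$ as a theory of the logic ${\cal X}_5$).
   Context: Fix a set $\mathit{At}$ of atoms. An explicit literal is an atom $p$ or its explicit negation $\sim p$; a set of explicit literals is consistent if it does not contain both $p$ and $\sim p$ for any $p$. Nested expressions: $F ::= \top \mid \bot \mid p \mid F\vee F \mid F\wedge F \mid \neg F \mid \sim F$ ($p\in\mathit{At}$). A rule is $F\to G$ with $F,G$ nested expressions; a program is a set of rules; a program is explicit if it contains no $\neg$. Classical satisfaction/falsification of a nested expression by a consistent set $T$ of explicit literals: $T\models\top$, $T\not\models\bot$, $T\models p$ iff $p\in T$, $T\models\varphi\wedge\psi$ iff both, $T\models\varphi\vee\psi$ iff at least one, $T\models\sim\varphi$ iff $T=\!\!|\;\varphi$, $T\models\neg\varphi$ iff $T\not\models\varphi$; $T$ does not falsify $\top$, $T=\!\!|\;\bot$, $T=\!\!|\;p$ iff $\sim p\in T$, $T=\!\!|\;\varphi\wedge\psi$ iff $T$ falsifies at least one, $T=\!\!|\;\varphi\vee\psi$ iff $T$ falsifies both, $T=\!\!|\;\sim\varphi$ iff $T\models\varphi$, $T=\!\!|\;\neg\varphi$ iff $T\models\varphi$. $T$ is a model of a program if for every rule $F\to G$, $T\models F$ implies $T\models G$. Reduct of a nested expression w.r.t. $T$: $\top^T=\top$, $\bot^T=\bot$, $p^T=p$,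 $(F\wedge G)^T=F^T\wedge G^T$, $(F\vee G)^T=F^T\vee G^T$, $(\sim F)^T=\sim(F^T)$, $(\neg F)^T=\bot$ if $T\models F$ and $\top$ otherwise. $\Pi^T=\{F^T\to G^T \mid (F\to G)\in\Pi\}$. $T$ is an answer set of $\Pi$ if $T$ is a model of $\Pi^T$ and no consistent set $H\subsetneq T$ is a model of $\Pi^T$. Logic ${\cal X}_5$: formulas $\varphi ::= p\mid\bot\mid\varphi\wedge\varphi\mid\varphi\vee\varphi\mid\varphi\to\varphi\mid\sim\varphi$, with abbreviations $\neg\varphi:=\varphi\to\bot$, $\top:=\neg\bot$ (so nested expressions and rules are formulas, a program is a theory). An ${\cal X}_5$-interpretation is a pair $\langle H,T\rangle$ of consistent sets of explicit literals with $H\subseteq T$. Satisfaction $\models$ and falsification $=\!\!|\;$ are defined jointly: $\langle H,T\rangle\not\models\bot$, $\langle H,T\rangle=\!\!|\;\bot$; $\models p$ iff $p\in H$, $=\!\!|\;p$ iff $\sim p\in H$; $\models\varphi\wedge\psi$ iff both satisfied, $=\!\!|\;\varphi\wedge\psi$ iff at least one falsified; $\models\varphi\vee\psi$ iff at least one satisfied, $=\!\!|\;\varphi\vee\psi$ iff both falsified; $\models\sim\varphi$ iff $=\!\!|\;\varphi$, $=\!\!|\;\sim\varphi$ iff $\models\varphi$; $\langle H,T\rangle\models\varphi\to\psi$ iff (i) $\langle H,T\rangle\not\models\varphi$ or $\langle H,T\rangle\models\psi$, and (ii) $\langle T,T\rangle\not\models\varphi$ or $\langle T,T\rangle\models\psi$;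 $\langle H,T\rangle=\!\!|\;\varphi\to\psi$ iff $\langle T,T\rangle\models\varphi$ and $\langle H,T\rangle=\!\!|\;\psi$. $\langle H,T\rangle$ is a model of a theory $\Gamma$ if it satisfies every formula of $\Gamma$. A total interpretation $\langle T,T\rangle$ is an equilibrium model of $\Gamma$ if it is a model of $\Gamma$ and there is no model $\langle H,T\rangle$ of $\Gamma$ with $H\subsetneq T$. *)

(* Defs.v *)
(* Sets of explicit literals are boolean predicates lit -> bool;
   programs (sets of rules, possibly infinite) are predicates rule -> Prop. *)
From Stdlib Require Import Bool.
Set Implicit Arguments.

Section Defs.
Variable At : Type.

Inductive lit : Type := Pos (p : At) | Neg (p : At).

Definition litset := lit -> bool.

Definition consistent (T : litset) : Prop :=
  forall p, ~ (T (Pos p) = true /\ T (Neg p) = true).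

Definition subset (H T : litset) : Prop := forall l, H l = true -> T l = true.
Definition psubset (H T : litset) : Prop :=
  subset H T /\ exists l, T l = true /\ H l = false.

Inductive nexp : Type :=
| NTop | NBot | NAtom (p : At)
| NOr (F G : nexp) | NAnd (F G : nexp)
| NNot (F : nexp)   (* default negation *)
| NSim (F : nexp).  (* explicit negation *)

Record rule : Type := Rule { body : nexp; head : nexp }.
Definition program := rule -> Prop.

Fixpoint csat (T : litset) (F : nexp) {struct F} : bool :=
  match F with
  | NTop => true
  | NBot => false
  | NAtom p => T (Pos p)
  | NAnd F G => csat T F && csat T G
  | NOr F G => csat T F || csat T G
  | NSim F => cfals T F
  | NNot F => negb (csat T F)
  end
with cfals (T : litset) (F : nexp) {struct F} : bool :=
  match F with
  | NTop => false
  | NBot => true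
  | NAtom p => T (Neg p)
  | NAnd F G => cfals T F || cfals T G
  | NOr F G => cfals T F && cfals T G
  | NSim F => csat T F
  | NNot F => csat T F
  end.

Definition cmodel (T : litset) (P : program) : Prop :=
  forall r, P r -> csat T (body r) = true -> csat T (head r) = true.

Fixpoint reduct (T : litset) (F : nexp) : nexp :=
  match F with
  | NTop => NTop
  | NBot => NBot
  | NAtom p => NAtom p
  | NAnd F G => NAnd (reduct T F) (reduct T G)
  | NOr F G => NOr (reduct T F) (reduct T G)
  | NSim F => NSim (reduct T F)
  | NNot F => if csat T F then NBot else NTop
  end.

Definition reduct_rule (T : litset) (r : rule) : rule :=
  Rule (reduct T (body r)) (reduct T (head r)).

Definition reduct_prog (P : program) (T : litset) : program :=
  fun r' => exists r, P r /\ r' = reduct_rule T r.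

Definition answer_set (P : program) (T : litset) : Prop :=
  consistent T /\ cmodel T (reduct_prog P T) /\
  ~ (exists H, consistent H /\ psubset H T /\ cmodel H (reduct_prog P T)).

Inductive form : Type :=
| FAtom (p : At) | FBot
| FAnd (a b : form) | FOr (a b : form) | FImp (a b : form) | FSim (a : form).

Definition FNeg (a : form) : form := FImp a FBot.
Definition FTop : form := FNeg FBot.

Fixpoint xsat (H T : litset) (f : form) {struct f} : bool :=
  match f with
  | FBot => false
  | FAtom p => H (Pos p)
  | FAnd a b => xsat H T a && xsat H T b
  | FOr a b => xsat H T a || xsat H T b
  | FSim a => xfals H T a
  | FImp a b => (negb (xsat H T a) || xsat H T b)
                && (negb (xsat T T a) || xsat T T b)
  end
with xfals (H T : litset) (f : form) {struct f} : bool :=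
  match f with
  | FBot => true
  | FAtom p => H (Neg p)
  | FAnd a b => xfals H T a || xfals H T b
  | FOr a b => xfals H T a && xfals H T b
  | FSim a => xsat H T a
  | FImp a b => xsat T T a && xfals H T b
  end.

Fixpoint nexp2form (F : nexp) : form :=
  match F with
  | NTop => FTop
  | NBot => FBot
  | NAtom p => FAtom p
  | NAnd F G => FAnd (nexp2form F) (nexp2form G)
  | NOr F G => FOr (nexp2form F) (nexp2form G)
  | NSim F => FSim (nexp2form F)
  | NNot F => FNeg (nexp2form F)
  end.

Definition rule2form (r : rule) : form := FImp (nexp2form (body r)) (nexp2form (head r)).

Definition x5_interp (H T : litset) : Prop := consistent H /\ consistent T /\ subset H T.

Definition x5_model (H T : litset) (P : program) : Prop :=
  x5_interp H T /\ forall r, P r -> xsat H T (rule2form r) = true.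

Definition equilibrium_model (P : program) (T : litset) : Prop :=
  x5_model T T P /\ ~ (exists H, psubset H T /\ x5_model H T P).

End Defs.

(* Main.v *)
Require Import Defs.
From Stdlib Require Import Bool.
Set Implicit Arguments.

Section Aux.
Variable At : Type.

Lemma mono (H T : litset At) : subset H T -> forall f,
  (xsat H T f = true -> xsat T T f = true) /\ (xfals H T f = true -> xfals T T f = true).
Proof.
  intros Hs f; induction f; simpl.
  - split; intros X; apply (Hs _ X).
  - split; auto.
  - destruct IHf1 as [A1 B1], IHf2 as [A2 B2]; split; intros X.
    + apply andb_true_iff in X as [X1 X2]. rewrite A1, A2; auto.
    + apply orb_true_iff in X as [X|X]; apply orb_true_iff; auto.
  - destruct IHf1 as [A1 B1], IHf2 as [A2 B2]; split; intros X.
    + apply orb_true_iff in X as [X|X]; apply orb_true_iff; auto.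
    + apply andb_true_iff in X as [X1 X2]. rewrite B1, B2; auto.
  - destruct IHf1 as [A1 B1], IHf2 as [A2 B2]; split; intros X.
    + apply andb_true_iff in X as [X1 X2]. rewrite X2. reflexivity.
    + apply andb_true_iff in X as [X1 X2]. rewrite X1, B2; auto.
  - destruct IHf; split; auto.
Qed.

Lemma tot (T : litset At) : forall F,
  xsat T T (nexp2form F) = csat T F /\ xfals T T (nexp2form F) = cfals T F.
Proof.
  induction F; simpl; auto.
  - destruct IHF1 as [-> ->], IHF2 as [-> ->]; auto.
  - destruct IHF1 as [-> ->], IHF2 as [-> ->]; auto.
  - destruct IHF as [E1 E2]. rewrite ?E1, ?E2. destruct (csat T F); auto.
  - destruct IHF as [-> ->]; auto.
Qed.

Lemma red (H T : litset At) : subset H T -> forall F,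
  xsat H T (nexp2form F) = csat H (reduct T F) /\
  xfals H T (nexp2form F) = cfals H (reduct T F).
Proof.
  intros Hs; induction F; simpl; auto.
  - destruct IHF1 as [-> ->], IHF2 as [-> ->]; auto.
  - destruct IHF1 as [-> ->], IHF2 as [-> ->]; auto.
  - destruct (tot T F) as [E1 _]. rewrite E1.
    destruct (mono Hs (nexp2form F)) as [M _]. rewrite E1 in M.
    destruct (csat T F) eqn:E; simpl.
    + rewrite andb_false_r. split; reflexivity.
    + destruct (xsat H T (nexp2form F)) eqn:E2.
      * specialize (M eq_refl); discriminate.
      * split; reflexivity.
  - destruct IHF as [-> ->]; auto.
Qed.

Lemma rule_sat (H T : litset At) (r : rule At) : subset H T ->
  xsat H T (rule2form r) =
  (negb (csat H (reduct T (body r))) || csat H (reduct T (head r)))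
  && (negb (csat T (body r)) || csat T (head r)).
Proof.
  intros Hs. unfold rule2form. simpl.
  rewrite (proj1 (red Hs (body r))), (proj1 (red Hs (head r))),
    (proj1 (tot T (body r))), (proj1 (tot T (head r))). reflexivity.
Qed.

Lemma red_tot (T : litset At) F : csat T (reduct T F) = csat T F.
Proof.
  assert (Hs : subset T T) by (intros l; auto).
  rewrite <- (proj1 (red Hs F)). apply tot.
Qed.

End Aux.

Theorem theorem3 (At : Type) (P : program At) (T : litset At) :
  consistent T -> (answer_set P T <-> equilibrium_model P T).
Proof.
  intros CT. assert (Hs : subset T T) by (intros l; auto).
  split.
  - intros [_ [CM NM]]. split.
    + split; [split; [exact CT | split; [exact CT | exact Hs]] |].
      intros r Pr. rewrite rule_sat by exact Hs.
      assert (X : csat T (body r) = true -> csat T (head r) = true).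
      { intros B. rewrite <- red_tot. apply (CM (reduct_rule T r)).
        - exists r; auto.
        - simpl. rewrite red_tot; auto. }
      rewrite !red_tot. destruct (csat T (body r)); simpl; rewrite ?X; auto.
    + intros [H [PS [[CH [_ SH]] M]]]. apply NM. exists H. split; [exact CH|split; [exact PS|]].
      intros r' [r [Pr ->]] B. simpl in B |- *.
      specialize (M r Pr). rewrite rule_sat in M by exact SH.
      apply andb_true_iff in M as [M _]. rewrite B in M. exact M.
  - intros [[_ M] NM]. split; [exact CT|split].
    + intros r' [r [Pr ->]] B. simpl in B |- *.
      specialize (M r Pr). rewrite rule_sat in M by exact Hs.
      apply andb_true_iff in M as [M _]. rewrite B in M. exact M.
    + intros [H [CH [PS CM]]]. apply NM. exists H. split; [exact PS|].
      split; [split; [exact CH|split; [exact CT|exact (proj1 PS)]]|].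
      intros r Pr. rewrite rule_sat by exact (proj1 PS).
      specialize (M r Pr). rewrite rule_sat in M by exact Hs.
      apply andb_true_iff in M as [_ M]. rewrite M, andb_true_r.
      destruct (csat H (reduct T (body r))) eqn:B; simpl; auto.
      apply (CM (reduct_rule T r)); [exists r; auto | exact B].
Qed.
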